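(* Let $\theta < \sigma$ be two infinite cardinals such that $\theta$ is regular, $\sigma < \kappa$, and $d(\theta, \mu) < \kappa$ for every cardinal $\mu$ with $\theta \leq \mu < \sigma$. Let $J$ be a $\kappa$-complete ideal on $\kappa$ with $NS_\kappa|E^\kappa_\theta \subseteq J$ such that $\clubsuit_\kappa^{{\rm cof}/\sigma, *}[J]$ holds. Then $\clubsuit_\kappa^*[J]$ holds.
   Context: $\kappa$ is a regular uncountable cardinal. An ideal on $\kappa$ is a nonempty $J \subseteq P(\kappa)$ with $\kappa \notin J$, every bounded subset of $\kappa$ in $J$, $J$ closed under subsets and under unions of two members; $J^* = \{A \subseteq \kappa : \kappa\setminus A \in J\}$; $\kappa$-complete means closed under unions of fewer than $\kappa$ members. $E^\kappa_\theta$ is the set of limit ordinals below $\kappa$ of cofinality $\theta$; $NS_\kappa|E^\kappa_\theta = \{B : B \cap E^\kappa_\theta \text{ nonstationary}\}$. $acc(\kappa)$ is the set of nonzero limit ordinals below $\kappa$; $P_\sigma(X) = \{x \subseteq X : |x| < \sigma\}$; $[\kappa]^\kappa$ is the set of size-$\kappa$ subsets of $\kappa$. For cardinals $\tau \leq \mu$ with $\tau\ge1$, $\mu \ge\omega$, $d(\tau,\mu)$ is the least cardinality of $X \subseteq [\mu]^\tau$ such that every $e \in [\mu]^\tau$ has a subset in $X$. $\clubsuit_\kappa^{{\rm cof}/\sigma,*}[J]$: there are $B^i_\delta \in P_\sigma(\delta)$ for $i < \delta < \kappa$ such that for every $A \in [\kappa]^\kappa$, $\{\delta < \kappa : \exists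 i < \delta\,(\sup(A \cap B^i_\delta) = \delta)\} \in J^*$. $\clubsuit_\kappa^*[J]$: there are $s^i_\alpha \subseteq \alpha$ with $\sup s^i_\alpha = \alpha$ for $i < \alpha \in acc(\kappa)$ such that $\{\alpha < \kappa : \exists i < \alpha\,(s^i_\alpha \subseteq A)\} \in J^*$ for all $A \in [\kappa]^\kappa$. *)

(* Defs.v *)
(* Ordinals below kappa are modelled as the
   elements of a type K equipped with a strict well-order [lt]; kappa is the
   order type of (K, lt).  Cardinals below kappa are initial ordinals in K. *)
From Stdlib Require Import Classical.
Set Implicit Arguments.

Definition set (T : Type) := T -> Prop.

Definition le_card (A B : Type) : Prop :=
  exists f : A -> B, forall x y, f x = f y -> x = y.
Definition lt_card (A B : Type) : Prop := le_card A B /\ ~ le_card B A.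
Definition eq_card (A B : Type) : Prop := le_card A B /\ le_card B A.

Section Ord.
Variable K : Type.
Variable lt : K -> K -> Prop.

Definition le (x y : K) : Prop := lt x y \/ x = y.

Definition well_order : Prop :=
  (forall x y z, lt x y -> lt y z -> lt x z) /\
  (forall x, ~ lt x x) /\
  (forall x y, lt x y \/ x = y \/ lt y x) /\
  well_founded lt.

(* the ordinal a, as the set of its predecessors *)
Definition seg (a : K) : Type := {y : K | lt y a}.

Definition bounded (B : set K) : Prop := exists b, forall x, B x -> lt x b.

Definition regular_uncountable_cardinal : Prop :=
  (forall a, lt_card (seg a) K) /\
  ~ le_card K nat /\
  (forall A : set K, lt_card {x : K | A x} K -> bounded A).

Definition is_cardinal (c : K) : Prop :=
  forall a, lt a c -> lt_card (seg a) (seg c).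
Definition infinite_ord (c : K) : Prop := le_card nat (seg c).
Definition regular_card (c : K) : Prop :=
  forall A : set K, (forall x, A x -> lt x c) ->
    lt_card {x : K | A x} (seg c) ->
    exists b, lt b c /\ forall x, A x -> lt x b.

(* d(theta, mu) < kappa : some cofinal family X in [mu]^theta has size < kappa *)
Definition d_lt_kappa (theta mu : K) : Prop :=
  exists X : set (set K),
    (forall B, X B -> (forall x, B x -> lt x mu) /\ eq_card {x : K | B x} (seg theta)) /\
    (forall e : set K, (forall x, e x -> lt x mu) -> eq_card {x : K | e x} (seg theta) ->
        exists B, X B /\ forall x, B x -> e x) /\
    lt_card {B : set K | X B} K.

Definition is_limit (d : K) : Prop :=
  (exists y, lt y d) /\ forall y, lt y d -> exists z, lt y z /\ lt z d.

Definition cofinal_in (d : K) (S : set K) : Prop :=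
  (forall x, S x -> lt x d) /\ forall y, lt y d -> exists x, S x /\ le y x.

Definition cof_eq (d theta : K) : Prop :=
  (exists S, cofinal_in d S /\ eq_card {x : K | S x} (seg theta)) /\
  (forall S, cofinal_in d S -> le_card (seg theta) {x : K | S x}).

Definition E_cof (theta : K) (d : K) : Prop := is_limit d /\ cof_eq d theta.

Definition club (C : set K) : Prop :=
  (forall a, exists c, C c /\ lt a c) /\
  (forall d, (exists y, lt y d) ->
     (forall y, lt y d -> exists c, C c /\ lt y c /\ lt c d) -> C d).

Definition nonstationary (B : set K) : Prop :=
  exists C, club C /\ forall x, C x -> ~ B x.

Definition NS_restr (theta : K) (B : set K) : Prop :=
  nonstationary (fun x => B x /\ E_cof theta x).

Definition is_ideal (J : set (set K)) : Prop :=
  (exists B, J B) /\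
  ~ J (fun _ => True) /\
  (forall B, bounded B -> J B) /\
  (forall A B, J B -> (forall x, A x -> B x) -> J A) /\
  (forall A B, J A -> J B -> J (fun x => A x \/ B x)).

Definition kappa_complete (J : set (set K)) : Prop :=
  forall F : set (set K), (forall B, F B -> J B) ->
    lt_card {B : set K | F B} K -> J (fun x => exists B, F B /\ B x).

Definition dual (J : set (set K)) (A : set K) : Prop := J (fun x => ~ A x).

Definition sup_is (X : set K) (d : K) : Prop :=
  (forall x, X x -> le x d) /\ (forall y, (forall x, X x -> le x y) -> le d y).

Definition clubsuit_cof_star (sigma : K) (J : set (set K)) : Prop :=
  exists B : K -> K -> set K,
    (forall i d, lt i d ->
       (forall x, B i d x -> lt x d) /\ lt_card {x : K | B i d x} (seg sigma)) /\
    (forall A : set K, eq_card {x : K | A x} K ->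
       dual J (fun d => exists i, lt i d /\ sup_is (fun x => A x /\ B i d x) d)).

Definition clubsuit_star (J : set (set K)) : Prop :=
  exists s : K -> K -> set K,
    (forall i a, is_limit a -> lt i a ->
       (forall x, s i a x -> lt x a) /\ sup_is (s i a) a) /\
    (forall A : set K, eq_card {x : K | A x} K ->
       dual J (fun a => is_limit a /\ exists i, lt i a /\ forall x, s i a x -> A x)).

End Ord.

(* Main.v *)
Require Import Defs.
From Stdlib Require Import Classical ClassicalEpsilon FunctionalExtensionality PropExtensionality.

Section Main.
Variable K : Type.
Variable lt : K -> K -> Prop.
Hypothesis Hwo : well_order lt.
Hypothesis Hkappa : regular_uncountable_cardinal lt.
Variable theta sigma : K.
Hypothesis Htheta_card : is_cardinal lt theta.
Hypothesis Hts : lt theta sigma.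
Hypothesis Hd : forall mu : K, is_cardinal lt mu -> le lt theta mu -> lt mu sigma ->
          d_lt_kappa lt theta mu.
Variable J : set (set K).
Hypothesis HJ : is_ideal lt J.
Hypothesis HNS : forall B : set K, NS_restr lt theta B -> J B.
Hypothesis Hcof : clubsuit_cof_star lt sigma J.

Lemma ltt x y z : lt x y -> lt y z -> lt x z.
Proof. destruct Hwo as [H _]. eauto. Qed.
Lemma irr x : ~ lt x x.
Proof. destruct Hwo as [_ [H _]]. auto. Qed.
Lemma tri x y : lt x y \/ x = y \/ lt y x.
Proof. destruct Hwo as [_ [_ [H _]]]. auto. Qed.
Lemma wfl : well_founded lt.
Proof. destruct Hwo as [_ [_ [_ H]]]. auto. Qed.
Lemma asy x y : lt x y -> lt y x -> False.
Proof. intros. apply (irr x). eapply ltt; eauto. Qed.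
Lemma le_refl x : le lt x x.
Proof. right; reflexivity. Qed.
Lemma lt_le x y : lt x y -> le lt x y.
Proof. left; auto. Qed.
Lemma le_lt x y z : le lt x y -> lt y z -> lt x z.
Proof. intros [H|H] H'; subst; eauto using ltt. Qed.
Lemma lt_le' x y z : lt x y -> le lt y z -> lt x z.
Proof. intros H' [H|H]; subst; eauto using ltt. Qed.
Lemma le_tr x y z : le lt x y -> le lt y z -> le lt x z.
Proof. intros [H|H] [H'|H']; subst; unfold le; eauto using ltt. Qed.
Lemma nlt_le x y : ~ lt x y -> le lt y x.
Proof. intros H. destruct (tri x y) as [A|[A|A]]; [tauto| right; auto | left; auto]. Qed.
Lemma le_nlt x y : le lt x y -> ~ lt y x.
Proof. intros [H|H] H'; subst; eauto using asy, irr. Qed.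

Definition mn (P : K -> Prop) : K :=
  epsilon (inhabits theta) (fun m => P m /\ forall y, P y -> le lt m y).

Lemma min_ex (P : K -> Prop) : (exists x, P x) -> exists m, P m /\ forall y, P y -> le lt m y.
Proof.
  intros [x Hx]. revert Hx. pattern x; apply (well_founded_ind wfl); clear x; intros x IH Px.
  destruct (classic (exists y, P y /\ lt y x)) as [[y [Py Hy]]|N].
  - eapply IH; eauto.
  - exists x. split; auto. intros y Py. apply nlt_le. intro. apply N; eauto.
Qed.

Lemma mn_spec (P : K -> Prop) : (exists x, P x) -> P (mn P) /\ forall y, P y -> le lt (mn P) y.
Proof. intro H. unfold mn. apply epsilon_spec. apply min_ex; auto. Qed.

Definition mx a b := epsilon (inhabits a) (fun m => le lt a m /\ le lt b m /\ (m = a \/ m = b)).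
Lemma mx_spec a b : le lt a (mx a b) /\ le lt b (mx a b) /\ (mx a b = a \/ mx a b = b).
Proof. unfold mx. apply epsilon_spec. destruct (tri a b) as [H|[H|H]].
  - exists b. split; [left; auto| split; [apply le_refl | auto]].
  - exists a. split; [apply le_refl| split; [right; auto | auto]].
  - exists a. split; [apply le_refl| split; [left; auto | auto]].
Qed.

Definition inj (P Q : K -> Prop) := exists f : K -> K,
  (forall x, P x -> Q (f x)) /\ (forall x y, P x -> P y -> f x = f y -> x = y).

Lemma inj_trans P Q R : inj P Q -> inj Q R -> inj P R.
Proof.
  intros [f [H1 H2]] [g [G1 G2]]. exists (fun x => g (f x)). split; [auto|].
  intros x y Px Py E. apply H2; auto.
Qed.
Lemma inj_sub (P Q : K -> Prop) : (forall x, P x -> Q x) -> inj P Q.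
Proof. intros H. exists (fun x => x). split; auto. Qed.
Lemma inj_mono (P P' Q Q' : K -> Prop) : (forall x, P' x -> P x) -> (forall x, Q x -> Q' x) ->
  inj P Q -> inj P' Q'.
Proof. intros H1 H2 H. eapply inj_trans; [apply inj_sub; eauto|]. eapply inj_trans; [eauto| apply inj_sub; eauto]. Qed.

Lemma sig_eq (P : K -> Prop) (u v : {x | P x}) : proj1_sig u = proj1_sig v -> u = v.
Proof. destruct u, v; simpl; intros; subst; f_equal; apply proof_irrelevance. Qed.

Lemma le_card_inj (P Q : K -> Prop) : le_card {x | P x} {x | Q x} -> inj P Q.
Proof.
  intros [f Hf].
  exists (fun x => match excluded_middle_informative (P x) with
                   | left p => proj1_sig (f (exist _ x p)) | right _ => x end).
  split.
  - intros x Px. destruct (excluded_middle_informative (P x)); [apply proj2_sig| tauto].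
  - intros x y Px Py. destruct (excluded_middle_informative (P x)); [|tauto].
    destruct (excluded_middle_informative (P y)); [|tauto].
    intro E. apply sig_eq in E. apply Hf in E. apply (f_equal (@proj1_sig _ _)) in E. exact E.
Qed.

Lemma inj_le_card (P Q : K -> Prop) : inj P Q -> le_card {x | P x} {x | Q x}.
Proof.
  intros [f [H1 H2]]. exists (fun u => exist _ (f (proj1_sig u)) (H1 _ (proj2_sig u))).
  intros u v E. apply (f_equal (@proj1_sig _ _)) in E. simpl in E.
  apply sig_eq. apply H2; auto; apply proj2_sig.
Qed.

Definition sm (P : K -> Prop) := ~ inj (fun _ => True) P.

Lemma lt_card_sm P : lt_card {x | P x} K -> sm P.
Proof.
  intros [_ H] [f [H1 H2]]. apply H. exists (fun x => exist _ (f x) (H1 x I)).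
  intros x y E. apply (f_equal (@proj1_sig _ _)) in E. apply H2; auto.
Qed.

Lemma sm_lt_card P : sm P -> lt_card {x | P x} K.
Proof.
  intro H. split.
  - exists (@proj1_sig _ _). intros u v E. apply sig_eq; auto.
  - intros [f Hf]. apply H. exists (fun x => proj1_sig (f x)). split.
    + intros; apply proj2_sig.
    + intros x y _ _ E. apply Hf. apply sig_eq; auto.
Qed.

Lemma sm_inj P Q : inj P Q -> sm Q -> sm P.
Proof. intros H HQ HP. apply HQ. eapply inj_trans; eauto. Qed.

Lemma sm_seg a : sm (fun y => lt y a).
Proof. destruct Hkappa as [H _]. apply lt_card_sm. apply H. Qed.

Lemma sm_bnd P : sm P -> exists b, forall x, P x -> lt x b.
Proof. intro H. destruct Hkappa as [_ [_ H3]]. apply H3. apply sm_lt_card; auto. Qed.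

Lemma bnd_sm P b : (forall x, P x -> lt x b) -> sm P.
Proof. intro H. apply (sm_inj _ (fun y => lt y b)); [apply inj_sub; eauto| apply sm_seg]. Qed.

Lemma no_max a : exists b, lt a b.
Proof.
  assert (S : sm (fun y => y = a)).
  { intros [f [H1 H2]]. destruct Hkappa as [_ [H _]]. apply H.
    exists (fun _ => 0). intros x y _. apply H2; auto. rewrite (H1 x I), (H1 y I); auto. }
  destruct (sm_bnd _ S) as [b Hb]. exists b; auto.
Qed.

Lemma sm_le a : sm (fun y => le lt y a).
Proof. destruct (no_max a) as [b Hb]. apply (bnd_sm _ b). intros x Hx. eapply le_lt; eauto. Qed.

Lemma sm_img (P : K -> Prop) (f : K -> K) : sm P -> sm (fun y => exists x, P x /\ y = f x).
Proof.
  intro H. apply (sm_inj _ P); auto.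
  exists (fun y => epsilon (inhabits theta) (fun x => P x /\ y = f x)). split.
  - intros y Hy. apply (epsilon_spec (inhabits theta) (fun x => P x /\ y = f x) Hy).
  - intros y1 y2 H1 H2 E.
    destruct (epsilon_spec (inhabits theta) (fun x => P x /\ y1 = f x) H1) as [_ E1].
    destruct (epsilon_spec (inhabits theta) (fun x => P x /\ y2 = f x) H2) as [_ E2].
    rewrite E1, E2, E. auto.
Qed.

Lemma sm_union (I : K -> Prop) (F : K -> K -> Prop) : sm I -> (forall k, I k -> sm (F k)) ->
  sm (fun x => exists k, I k /\ F k x).
Proof.
  intros HI HF.
  set (g := fun k => epsilon (inhabits theta) (fun b => forall x, F k x -> lt x b)).
  destruct (sm_bnd _ (sm_img _ g HI)) as [G HG].
  apply (bnd_sm _ G). intros x [k [Ik Fx]].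
  assert (Hg : forall x, F k x -> lt x (g k)).
  { apply (epsilon_spec (inhabits theta) (fun b => forall x, F k x -> lt x b)). apply sm_bnd; auto. }
  eapply ltt. apply Hg; eauto. apply HG. eauto.
Qed.

Lemma pair_bound (F : K * K -> K) m : exists b, forall i k, le lt i m -> le lt k m -> lt (F (i, k)) b.
Proof.
  assert (S : sm (fun x => exists i, le lt i m /\ (fun i z => exists k, le lt k m /\ z = F (i, k)) i x)).
  { apply sm_union. apply sm_le. intros i _. apply (sm_img _ (fun k => F (i,k))). apply sm_le. }
  destruct (sm_bnd _ S) as [b Hb]. exists b. intros i k Hi Hk. apply Hb. exists i. split; auto. exists k; auto.
Qed.

Lemma sm_nat (c : nat -> K) : sm (fun y => exists n, y = c n).
Proof.
  intros [f [H1 H2]]. destruct Hkappa as [_ [H _]]. apply H.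
  exists (fun x => epsilon (inhabits 0) (fun n => f x = c n)).
  intros x y E. apply H2; auto.
  rewrite (epsilon_spec (inhabits 0) (fun n => f x = c n) (H1 x I)).
  rewrite (epsilon_spec (inhabits 0) (fun n => f y = c n) (H1 y I)). rewrite E. auto.
Qed.


Section Rank.
Variable W : Type.
Variable R : W -> W -> Prop.
Hypothesis wfR : well_founded R.
Definition rank : W -> K :=
  Fix wfR (fun _ => K) (fun w rec => mn (fun z => forall w' (p : R w' w), lt (rec w' p) z)).
Lemma rank_eq w : rank w = mn (fun z => forall w', R w' w -> lt (rank w') z).
Proof.
  unfold rank at 1. rewrite Fix_eq. reflexivity.
  intros x f g H. assert (E : f = g).
  { apply functional_extensionality_dep; intro y. apply functional_extensionality; intro p. auto. }
  subst; reflexivity.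
Qed.
Lemma rank_spec w : (exists z, forall w', R w' w -> lt (rank w') z) ->
  (forall w', R w' w -> lt (rank w') (rank w)) /\
  (forall z, (forall w', R w' w -> lt (rank w') z) -> le lt (rank w) z).
Proof. intro H. pose proof (rank_eq w) as E. rewrite E. exact (mn_spec _ H). Qed.
End Rank.

Definition pmx (p : K * K) := mx (fst p) (snd p).
Definition PR (q p : K * K) : Prop :=
  lt (pmx q) (pmx p) \/ (pmx q = pmx p /\ (lt (fst q) (fst p) \/ (fst q = fst p /\ lt (snd q) (snd p)))).

Lemma PR_wf : well_founded PR.
Proof.
  intros [i k]. remember (mx i k) as m. revert i k Heqm.
  pattern m; apply (well_founded_ind wfl); clear m; intros m IHm i.
  pattern i; apply (well_founded_ind wfl); clear i; intros i IHi k.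
  pattern k; apply (well_founded_ind wfl); clear k; intros k IHk Hm.
  constructor. intros [i' k'] Hr. unfold PR, pmx in Hr; simpl in Hr.
  destruct Hr as [H|[H [H'|[H1 H2]]]].
  - apply (IHm (mx i' k')); [rewrite Hm; exact H | reflexivity].
  - apply (IHi i'); [exact H' | congruence].
  - subst i'. apply IHk; [exact H2| congruence].
Qed.

Lemma PR_tri p q : p <> q -> PR p q \/ PR q p.
Proof.
  intros N. unfold PR.
  destruct (tri (pmx p) (pmx q)) as [H|[H|H]]; [left; left; exact H| |right; left; exact H].
  destruct (tri (fst p) (fst q)) as [H1|[H1|H1]]; [left; right; auto| |right; right; auto].
  destruct (tri (snd p) (snd q)) as [H2|[H2|H2]]; [left; right; auto| |right; right; auto].
  exfalso. apply N. destruct p, q; simpl in *; subst; auto.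
Qed.

Lemma PR_le q p : PR q p -> le lt (fst q) (pmx p) /\ le lt (snd q) (pmx p).
Proof.
  intros H. assert (L : le lt (pmx q) (pmx p)).
  { destruct H as [H|[H _]]; [left; auto| right; auto]. }
  destruct (mx_spec (fst q) (snd q)) as [A [B _]]. unfold pmx in L.
  split; eapply le_tr; eauto.
Qed.

Definition G := rank _ _ PR_wf.

Lemma G_mono q p : PR q p -> lt (G q) (G p).
Proof.
  intro H. unfold G. apply (rank_spec _ _ PR_wf p); auto.
  destruct (pair_bound (rank _ _ PR_wf) (pmx p)) as [b Hb]. exists b.
  intros [i k] Hr. destruct (PR_le _ _ Hr). apply Hb; auto.
Qed.

Lemma G_inj p q : G p = G q -> p = q.
Proof.
  intros E. destruct (classic (p = q)) as [|N]; auto.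
  destruct (PR_tri _ _ N) as [H|H]; apply G_mono in H; rewrite E in H; destruct (irr _ H).
Qed.

Definition clos (f : K -> K) (d : K) := forall a, lt a d -> lt (f a) d.

Lemma club_clos f : club lt (clos f).
Proof.
  split.
  - intros a.
    set (h := fun x => epsilon (inhabits theta) (fun b => lt x b /\ forall y, lt y x -> lt (f y) b)).
    assert (Hh : forall x, lt x (h x) /\ forall y, lt y x -> lt (f y) (h x)).
    { intro x. apply (epsilon_spec (inhabits theta) (fun b => lt x b /\ forall y, lt y x -> lt (f y) b)).
      destruct (sm_bnd _ (sm_img _ f (sm_seg x))) as [b1 Hb1]. destruct (no_max x) as [b2 Hb2].
      destruct (mx_spec b1 b2) as [A [B _]]. exists (mx b1 b2). split.
      - eapply lt_le'; eauto.
      - intros y Hy. eapply lt_le'; [|exact A]. apply Hb1. eauto. }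
    set (c := fun n => Nat.iter n h a).
    destruct (sm_bnd _ (sm_nat c)) as [b0 Hb0].
    set (P := fun b => forall n, lt (c n) b).
    assert (HP : exists b, P b) by (exists b0; intro n; apply Hb0; eauto).
    destruct (mn_spec P HP) as [P1 P2].
    exists (mn P). split.
    + intros y Hy. destruct (classic (exists n, ~ lt (c n) y)) as [[n Hn]|N].
      * apply nlt_le in Hn. apply (ltt _ (c (S (S n)))); [|apply P1].
        change (c (S (S n))) with (h (c (S n))). apply Hh. change (c (S n)) with (h (c n)).
        eapply le_lt; [exact Hn| apply Hh].
      * exfalso. assert (P y). { intro n. apply NNPP. intro; apply N; eauto. }
        apply (le_nlt _ _ (P2 _ H) Hy).
    + apply (P1 0).
  - intros d _ H a Ha. destruct (H a Ha) as [c [Cc [H1 H2]]]. eapply ltt; [apply Cc; auto| auto].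
Qed.

Definition SR (Y : K -> Prop) (y' y : K) := Y y' /\ lt y' y.
Lemma SR_wf Y : well_founded (SR Y).
Proof. intro y. pattern y; apply (well_founded_ind wfl); clear y; intros y IH. constructor. intros y' [_ H]. auto. Qed.

Lemma col_spec Y : forall y, le lt (rank _ _ (SR_wf Y) y) y /\
  (forall y', SR Y y' y -> lt (rank _ _ (SR_wf Y) y') (rank _ _ (SR_wf Y) y)) /\
  (forall z, (forall y', SR Y y' y -> lt (rank _ _ (SR_wf Y) y') z) -> le lt (rank _ _ (SR_wf Y) y) z).
Proof.
  intro y. pattern y; apply (well_founded_ind wfl); clear y; intros y IH.
  assert (Ex : exists z, forall y', SR Y y' y -> lt (rank _ _ (SR_wf Y) y') z).
  { exists y. intros y' [Yy H]. eapply le_lt; [apply (proj1 (IH y' H)) | auto]. }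
  destruct (rank_spec _ _ (SR_wf Y) y Ex) as [A B]. split; [|split; auto].
  apply B. intros y' [Yy H]. eapply le_lt; [apply (proj1 (IH y' H)) | auto].
Qed.

Lemma col_down Y : forall y z, lt z (rank _ _ (SR_wf Y) y) -> exists y', Y y' /\ rank _ _ (SR_wf Y) y' = z.
Proof.
  intro y. pattern y; apply (well_founded_ind wfl); clear y; intros y IH z Hz.
  destruct (col_spec Y y) as [_ [_ M]].
  destruct (classic (exists y', SR Y y' y /\ ~ lt (rank _ _ (SR_wf Y) y') z)) as [[y' [[Yy Hy] N]]|N].
  - apply nlt_le in N. destruct N as [N|N].
    + eapply IH; eauto.
    + exists y'; auto.
  - exfalso. assert (L : le lt (rank _ _ (SR_wf Y) y) z).
    { apply M. intros y' Hs. apply NNPP. intro; apply N; eauto. }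
    eapply le_nlt; eauto.
Qed.

Lemma below_sigma Y : ~ inj (fun z => lt z sigma) Y -> exists a, lt a sigma /\ inj Y (fun z => lt z a).
Proof.
  intro N. set (r := rank _ _ (SR_wf Y)).
  destruct (classic (forall z, lt z sigma -> exists y, Y y /\ r y = z)) as [A|A].
  - exfalso. apply N. exists (fun z => epsilon (inhabits theta) (fun y => Y y /\ r y = z)). split.
    + intros z Hz. apply (epsilon_spec (inhabits theta) (fun y => Y y /\ r y = z) (A z Hz)).
    + intros z1 z2 H1 H2 E.
      destruct (epsilon_spec (inhabits theta) (fun y => Y y /\ r y = z1) (A z1 H1)) as [_ E1].
      destruct (epsilon_spec (inhabits theta) (fun y => Y y /\ r y = z2) (A z2 H2)) as [_ E2].
      rewrite <- E1, <- E2, E. auto.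
  - apply not_all_ex_not in A. destruct A as [a A]. apply imply_to_and in A. destruct A as [Ha A].
    exists a. split; auto. exists r. split.
    + intros y Yy. destruct (tri (r y) a) as [H|[H|H]]; auto; exfalso; apply A.
      * exists y; auto.
      * apply (col_down Y y a H).
    + intros x y Yx Yy E. destruct (tri x y) as [H|[H|H]]; auto; exfalso.
      * destruct (col_spec Y y) as [_ [M _]]. pose proof (M x (conj Yx H)) as L.
        unfold r in E. rewrite E in L. exact (irr _ L).
      * destruct (col_spec Y x) as [_ [M _]]. pose proof (M y (conj Yy H)) as L.
        unfold r in E. rewrite E in L. exact (irr _ L).
Qed.

Lemma card_contra b : lt b theta -> inj (fun y => lt y theta) (fun y => lt y b) -> False.
Proof.
  intros Hb Hi. destruct (Htheta_card b Hb) as [_ N]. apply N.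
  exact (inj_le_card (fun y => lt y theta) (fun y => lt y b) Hi).
Qed.

Lemma sig_eqT {A : Type} (P : A -> Prop) (u v : {x | P x}) : proj1_sig u = proj1_sig v -> u = v.
Proof. destruct u, v; simpl; intros; subst; f_equal; apply proof_irrelevance. Qed.

Lemma lt_card_le {A B C : Type} : le_card A B -> lt_card B C -> lt_card A C.
Proof.
  intros [f Hf] [[g Hg] N]. split.
  - exists (fun x => g (f x)). intros x y E. auto.
  - intros [k Hk]. apply N. exists (fun x => f (k x)). intros x y E. auto.
Qed.

Lemma inj_img_back (P : K -> Prop) (f : K -> K) : inj (fun y => exists x, P x /\ y = f x) P.
Proof.
  exists (fun y => epsilon (inhabits theta) (fun x => P x /\ y = f x)). split.
  - intros y Hy. apply (epsilon_spec (inhabits theta) (fun x => P x /\ y = f x) Hy).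
  - intros y1 y2 H1 H2 E.
    destruct (epsilon_spec (inhabits theta) (fun x => P x /\ y1 = f x) H1) as [_ E1].
    destruct (epsilon_spec (inhabits theta) (fun x => P x /\ y2 = f x) H2) as [_ E2].
    rewrite E1, E2, E. auto.
Qed.

Lemma inj_img_fwd (P : K -> Prop) (f : K -> K) : (forall x y, P x -> P y -> f x = f y -> x = y) ->
  inj P (fun y => exists x, P x /\ y = f x).
Proof. intros H. exists f. split; eauto. Qed.

Lemma fam_ex a : lt a sigma -> exists F : set (set K),
  lt_card {c | F c} K /\
  forall e : set K, (forall x, e x -> lt x a) -> inj e (fun y => lt y theta) ->
    inj (fun y => lt y theta) e ->
    exists c, F c /\ (forall x, c x -> e x) /\ inj (fun y => lt y theta) c.
Proof.
  intros Ha. destruct (classic (lt a theta)) as [Hat|Hat].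
  - exists (fun _ => False). split.
    + split.
      * exists (fun u : {c : set K | False} => False_rect K (proj2_sig u)). intros u. destruct (proj2_sig u).
      * intros [f _]. destruct (proj2_sig (f theta)).
    + intros e He _ Hi. exfalso. apply (card_contra a Hat).
      eapply inj_trans; [exact Hi | apply inj_sub; auto].
  - apply nlt_le in Hat.
    set (Pm := fun mu => inj (fun y => lt y a) (fun y => lt y mu)).
    assert (EPm : exists mu, Pm mu) by (exists a; apply inj_sub; auto).
    destruct (mn_spec Pm EPm) as [Pmu Mmu]. set (mu := mn Pm) in *.
    assert (Hmua : le lt mu a) by (apply Mmu; apply inj_sub; auto).
    assert (Hcard : is_cardinal lt mu).
    { intros b Hb. split.
      - apply (inj_le_card (fun y => lt y b) (fun y => lt y mu)). apply inj_sub. intros; eapply ltt; eauto.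
      - intro Hle. apply (le_card_inj (fun y => lt y mu) (fun y => lt y b)) in Hle.
        assert (Pm b) by (eapply inj_trans; eauto).
        apply (le_nlt _ _ (Mmu b H) Hb). }
    assert (Hthmu : le lt theta mu).
    { apply nlt_le. intro Hm. apply (card_contra mu Hm).
      eapply inj_trans; [|exact Pmu]. apply inj_sub. intros; eapply lt_le'; eauto. }
    assert (Hmus : lt mu sigma) by (eapply le_lt; eauto).
    destruct (Hd mu Hcard Hthmu Hmus) as [X [HX1 [HX2 HX3]]].
    destruct Pmu as [psi [Hp1 Hp2]].
    set (Fm := fun c : set K => exists B', X B' /\ c = (fun x => lt x a /\ B' (psi x))).
    exists Fm. split.
    + apply (lt_card_le (B := {B' | X B'})); [|exact HX3].
      set (PP := fun (u : {c | Fm c}) B' => X B' /\ proj1_sig u = (fun x => lt x a /\ B' (psi x))).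
      exists (fun u => exist _ (epsilon (inhabits (fun _ : K => False)) (PP u))
                         (proj1 (epsilon_spec (inhabits (fun _ : K => False)) (PP u) (proj2_sig u)))).
      intros u v E. apply (f_equal (@proj1_sig _ _)) in E. simpl in E.
      destruct (epsilon_spec (inhabits (fun _ : K => False)) (PP u) (proj2_sig u)) as [_ Eu].
      destruct (epsilon_spec (inhabits (fun _ : K => False)) (PP v) (proj2_sig v)) as [_ Ev].
      apply sig_eqT. rewrite Eu, Ev, E. reflexivity.
    + intros e He Hi1 Hi2.
      set (e' := fun y => exists x, e x /\ y = psi x).
      assert (Hinj : forall x y, e x -> e y -> psi x = psi y -> x = y) by (intros; apply Hp2; auto).
      assert (Ee' : eq_card {x | e' x} (seg lt theta)).
      { split.
        - apply (inj_le_card e' (fun y => lt y theta)). eapply inj_trans; [apply inj_img_back| exact Hi1].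
        - apply (inj_le_card (fun y => lt y theta) e'). eapply inj_trans; [exact Hi2| apply inj_img_fwd; auto]. }
      assert (Be' : forall x, e' x -> lt x mu) by (intros y [x [ex E]]; subst; apply Hp1; auto).
      destruct (HX2 e' Be' Ee') as [B' [XB' SB']].
      destruct (HX1 B' XB') as [_ [_ EB']].
      apply (le_card_inj (fun y => lt y theta) B') in EB'.
      exists (fun x => lt x a /\ B' (psi x)). split; [exists B'; auto|]. split.
      * intros x [xa Bx]. destruct (SB' _ Bx) as [x0 [ex0 E]]. apply Hp2 in E; auto. subst; auto.
      * eapply inj_trans; [exact EB'|].
        exists (fun y => epsilon (inhabits theta) (fun x => e x /\ y = psi x)). split.
        -- intros y By. destruct (epsilon_spec (inhabits theta) (fun x => e x /\ y = psi x) (SB' y By)) as [ex E].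
           split; [auto|]. rewrite <- E. auto.
        -- intros y1 y2 H1 H2 E.
           destruct (epsilon_spec (inhabits theta) (fun x => e x /\ y1 = psi x) (SB' y1 H1)) as [_ E1].
           destruct (epsilon_spec (inhabits theta) (fun x => e x /\ y2 = psi x) (SB' y2 H2)) as [_ E2].
           rewrite E1, E2, E. auto.
Qed.

Lemma enum_ex (F : set (set K)) : lt_card {c | F c} K ->
  exists b (en : K -> set K), forall c, F c -> exists k, lt k b /\ en k = c.
Proof.
  intros [[iota Hi] N].
  set (Im := fun k => exists u : {c | F c}, k = iota u).
  assert (S : sm Im).
  { intros [f [H1 H2]]. destruct (H1 theta I) as [u0 _]. apply N.
    exists (fun x => epsilon (inhabits u0) (fun u => f x = iota u)).
    intros x y E. apply H2; auto.
    rewrite (epsilon_spec (inhabits u0) (fun u => f x = iota u) (H1 x I)).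
    rewrite (epsilon_spec (inhabits u0) (fun u => f y = iota u) (H1 y I)). rewrite E. auto. }
  destruct (sm_bnd _ S) as [b Hb]. exists b.
  exists (fun k => epsilon (inhabits (fun _ : K => False)) (fun c => exists p : F c, iota (exist _ c p) = k)).
  intros c Fc. exists (iota (exist _ c Fc)). split.
  - apply Hb. exists (exist _ c Fc); auto.
  - destruct (epsilon_spec (inhabits (fun _ : K => False))
      (fun c' => exists p : F c', iota (exist _ c' p) = iota (exist _ c Fc))
      (ex_intro _ c (ex_intro _ Fc eq_refl))) as [p E].
    apply Hi in E. apply (f_equal (@proj1_sig _ _)) in E. exact E.
Qed.

Lemma nle_lt x y : ~ le lt y x -> lt x y.
Proof. intro H. destruct (tri x y) as [A|[A|A]]; auto; exfalso; apply H; [right; auto| left; auto]. Qed.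

Lemma records d (T : K -> Prop) : cof_eq lt d theta -> (forall x, T x -> lt x d) ->
  (forall y, lt y d -> exists x, T x /\ le lt y x) ->
  exists R, (forall x, R x -> T x) /\ inj R (fun y => lt y theta) /\ inj (fun y => lt y theta) R /\
    forall e, (forall x, e x -> R x) -> inj (fun y => lt y theta) e ->
      forall y, lt y d -> exists x, e x /\ le lt y x.
Proof.
  intros [[S [[HS1 HS2] HSc]] HCmin] HT1 HT2.
  destruct HSc as [HSc _]. apply (le_card_inj S (fun y => lt y theta)) in HSc.
  destruct HSc as [h [Hh1 Hh2]].
  set (RS := fun s => S s /\ forall s', S s' -> lt (h s') (h s) -> lt s' s).
  assert (C1 : forall s, S s -> exists r, RS r /\ le lt s r).
  { intros s Ss. remember (h s) as al. revert s Ss Heqal.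
    pattern al; apply (well_founded_ind wfl); clear al; intros al IH s Ss E.
    destruct (classic (RS s)) as [Rs|Rs].
    - exists s; split; auto using le_refl.
    - assert (Ex : exists s', S s' /\ lt (h s') (h s) /\ ~ lt s' s).
      { apply NNPP. intro M. apply Rs. split; auto. intros s' Ss' Hl. apply NNPP. intro. apply M; eauto. }
      destruct Ex as [s' [Ss' [Hl Hn]]].
      subst al. destruct (IH (h s') Hl s' Ss' eq_refl) as [r [Rr Hr]].
      exists r. split; auto. eapply le_tr; [apply nlt_le; exact Hn| exact Hr]. }
  assert (C2 : forall r1 r2, RS r1 -> RS r2 -> lt (h r1) (h r2) -> lt r1 r2).
  { intros r1 r2 [S1 _] [_ R2] H. apply R2; auto. }
  set (m := fun r => mn (fun t => T t /\ le lt r t)).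
  assert (Hm : forall r, lt r d -> T (m r) /\ le lt r (m r)).
  { intros r Hr. destruct (HT2 r Hr) as [x Hx]. apply (mn_spec (fun t => T t /\ le lt r t)). eauto. }
  set (R := fun t => exists r, RS r /\ t = m r).
  set (pick := fun t => epsilon (inhabits theta) (fun r => RS r /\ t = m r)).
  assert (Hpick : forall t, R t -> RS (pick t) /\ t = m (pick t)).
  { intros t Ht. apply (epsilon_spec (inhabits theta) (fun r => RS r /\ t = m r) Ht). }
  assert (HRT : forall x, R x -> T x).
  { intros x [r [[Sr _] E]]. subst x. apply Hm. apply HS1; auto. }
  assert (HRinj : forall e b, (forall x, e x -> R x) -> (forall x, e x -> lt (h (pick x)) b) ->
                   inj e (fun y => lt y b)).
  { intros e b He Hb. exists (fun t => h (pick t)). split; auto.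
    intros x y Ex Ey E. destruct (Hpick x (He x Ex)) as [[Sx _] Ex'].
    destruct (Hpick y (He y Ey)) as [[Sy _] Ey']. apply Hh2 in E; auto. congruence. }
  assert (Rcof : forall y, lt y d -> exists t, R t /\ le lt y t).
  { intros y Hy. destruct (HS2 y Hy) as [s [Ss Hs]]. destruct (C1 s Ss) as [r [Rr Hr]].
    exists (m r). split; [exists r; auto|]. eapply le_tr; [exact Hs|]. eapply le_tr; [exact Hr|].
    apply Hm. apply HS1. destruct Rr; auto. }
  exists R. split; [exact HRT|]. split.
  { apply HRinj; auto. intros x Hx. apply Hh1. apply (Hpick x Hx). }
  split.
  { apply (le_card_inj (fun y => lt y theta) R). apply HCmin. split; [|exact Rcof].
    intros x Hx. apply HT1; auto. }
  intros e He Hte y Hy. apply NNPP. intro N.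
  destruct (HS2 y Hy) as [s [Ss Hs]]. destruct (C1 s Ss) as [r0 [Rr0 Hr0]].
  assert (Hy0 : le lt y r0) by (eapply le_tr; eauto).
  assert (Key : forall x, e x -> lt (h (pick x)) (h r0)).
  { intros x Ex. destruct (Hpick x (He x Ex)) as [Rx Ex'].
    assert (Lx : lt x y) by (apply nle_lt; intro; apply N; eauto).
    assert (Lr : lt (pick x) r0).
    { eapply le_lt; [|eapply lt_le'; [exact Lx| exact Hy0]].
      rewrite Ex' at 2. apply Hm. apply HS1. destruct Rx; auto. }
    destruct (tri (h (pick x)) (h r0)) as [A|[A|A]]; auto; exfalso.
    - apply Hh2 in A; [| destruct Rx; auto | destruct Rr0; auto]. rewrite A in Lr. exact (irr _ Lr).
    - apply (asy _ _ Lr). apply C2; auto. }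
  apply (card_contra (h r0)). { apply Hh1. destruct Rr0; auto. }
  eapply inj_trans; [exact Hte|]. apply HRinj; auto.
Qed.

Lemma sup_ext (P Q : K -> Prop) d : (forall x, P x <-> Q x) -> sup_is lt P d -> sup_is lt Q d.
Proof. intros E [A B]. split; [intros x Qx; apply A, E; auto| intros y H; apply B; intros x Px; apply H, E; auto]. Qed.

Lemma sup_seg d : is_limit lt d -> sup_is lt (fun x => lt x d) d.
Proof.
  intros [_ Hl]. split; [intros x Hx; left; auto|]. intros y H. apply nlt_le. intro Hy.
  destruct (Hl y Hy) as [z [Hz1 Hz2]]. apply (le_nlt _ _ (H z Hz2) Hz1).
Qed.

Lemma sup_cof P d : is_limit lt d -> (forall x, P x -> lt x d) ->
  (forall y, lt y d -> exists x, P x /\ le lt y x) -> sup_is lt P d.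
Proof.
  intros [_ Hl] H1 H2. split; [intros x Hx; left; auto|]. intros y H. apply nlt_le. intro Hy.
  destruct (Hl y Hy) as [z [Hz1 Hz2]]. destruct (H2 z Hz2) as [x [Px Hx]].
  apply (le_nlt _ _ (le_tr _ _ _ Hx (H x Px)) Hz1).
Qed.

Lemma sup_cof_inv P d : (forall x, P x -> lt x d) -> sup_is lt P d ->
  forall y, lt y d -> exists x, P x /\ le lt y x.
Proof.
  intros H1 [_ H2] y Hy. apply NNPP. intro N.
  assert (le lt d y). { apply H2. intros x Px. left. apply nle_lt. intro; apply N; eauto. }
  apply (le_nlt _ _ H Hy).
Qed.

Lemma choiceK {A B : Type} (b0 : B) (P : A -> B -> Prop) : (forall a, exists b, P a b) -> exists f, forall a, P a (f a).
Proof. intros H. exists (fun a => epsilon (inhabits b0) (P a)). intro a. apply epsilon_spec. auto. Qed.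

Definition goodc (c : set K) d := (forall x, c x -> lt x d) /\ sup_is lt c d.

Lemma main : clubsuit_star lt J.
Proof.
  destruct Hcof as [B0 [HB1 HB2]].
  destruct (choiceK (theta, fun x : K => x)
    (fun p q => lt (fst p) (snd p) -> lt (fst q) sigma /\
        (forall y, B0 (fst p) (snd p) y -> lt (snd q y) (fst q)) /\
        (forall x y, B0 (fst p) (snd p) x -> B0 (fst p) (snd p) y -> snd q x = snd q y -> x = y)))
    as [AR HAR].
  { intros [i d]. simpl. destruct (classic (lt i d)) as [Hi|Hi].
    - destruct (HB1 i d Hi) as [_ Hs].
      assert (N : ~ inj (fun z => lt z sigma) (B0 i d)).
      { intro Hn. destruct Hs as [_ Hs]. apply Hs. exact (inj_le_card _ _ Hn). }
      destruct (below_sigma _ N) as [a [Ha [r [Hr1 Hr2]]]].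
      exists (a, r). simpl. auto.
    - exists (theta, fun x : K => x). tauto. }
  destruct (choiceK (fun _ : set K => False) (fun a (F : set (set K)) => lt a sigma -> lt_card {c | F c} K /\
    forall e : set K, (forall x, e x -> lt x a) -> inj e (fun y => lt y theta) ->
    inj (fun y => lt y theta) e ->
    exists c, F c /\ (forall x, c x -> e x) /\ inj (fun y => lt y theta) c)) as [Fam HFam].
  { intro a. destruct (classic (lt a sigma)) as [Ha|Ha].
    - destruct (fam_ex a Ha) as [F HF]. exists F. auto.
    - exists (fun _ : set K => False). tauto. }
  destruct (choiceK (theta, fun _ : K => fun _ : K => False) (fun a q => lt a sigma ->
    forall c, Fam a c -> exists k, lt k (fst q) /\ snd q k = c)) as [EN HEN].
  { intro a. destruct (classic (lt a sigma)) as [Ha|Ha].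
    - destruct (HFam a Ha) as [Hc _]. destruct (enum_ex _ Hc) as [b [en H]]. exists (b, en). simpl. auto.
    - exists (theta, fun _ : K => fun _ : K => False). tauto. }
  destruct (sm_bnd _ (sm_img _ (fun a => fst (EN a)) (sm_seg sigma))) as [beta Hbeta].
  destruct (choiceK theta (fun al b => forall i k, le lt i al -> le lt k al -> lt (G (i, k)) b)) as [fb Hfb].
  { intro al. apply pair_bound. }
  set (cand := fun i d k => fun x => B0 i d x /\ snd (EN (fst (AR (i, d)))) k (snd (AR (i, d)) x)).
  set (s := fun j d => fun x =>
     (exists i k, G (i, k) = j /\ goodc (cand i d k) d /\ cand i d k x) \/
     (~ (exists i k, G (i, k) = j /\ goodc (cand i d k) d) /\ lt x d)).
  exists s. split.
  - intros j d Hdl Hj.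
    destruct (classic (exists i k, G (i, k) = j /\ goodc (cand i d k) d)) as [[i0 [k0 [E0 [Hg1 Hg2]]]]|N].
    + assert (Eq : forall x, cand i0 d k0 x <-> s j d x).
      { intro x. split.
        - intro H. left. exists i0, k0. exact (conj E0 (conj (conj Hg1 Hg2) H)).
        - intros [[i [k [E [_ H]]]]|[N _]].
          + rewrite <- E0 in E. apply G_inj in E. injection E; intros; subst; auto.
          + exfalso. apply N. exists i0, k0. exact (conj E0 (conj Hg1 Hg2)). }
      split.
      * intros x Hx. apply Hg1, Eq; auto.
      * eapply sup_ext; [exact Eq| exact Hg2].
    + assert (Eq : forall x, lt x d <-> s j d x).
      { intro x. split.
        - intro H. right. split; [exact N| exact H].
        - intros [[i [k [E [Hg H]]]]|[_ H]]; [|exact H]. exfalso. apply N. exists i, k. exact (conj E Hg). }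
      split.
      * intros x Hx. apply Eq; auto.
      * eapply sup_ext; [exact Eq| apply sup_seg; exact Hdl].
  - intros A HA. unfold dual.
    pose proof (HB2 A HA) as JB. unfold dual in JB.
    destruct HJ as [_ [_ [Jb [Js Ju]]]].
    assert (J1 : J (fun d => ~ E_cof lt theta d)).
    { apply HNS. exists (fun _ => True). split.
      - split.
        + intro a. destruct (no_max a) as [b Hb]. exists b. auto.
        + auto.
      - intros x _ [H1 H2]. auto. }
    assert (J2 : J (fun d => ~ clos fb d)).
    { apply HNS. exists (clos fb). split; [apply club_clos|]. intros x H [H1 _]. auto. }
    assert (J3 : J (fun d => le lt d beta)).
    { apply Jb. destruct (no_max beta) as [b Hb]. exists b. intros x Hx. eapply le_lt; eauto. }
    eapply Js; [apply Ju; [apply Ju; [apply Ju; [exact J1| exact J2]| exact J3]| exact JB]|].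
    intros d Hbad. apply NNPP. intro Hgood. apply Hbad.
    assert (HE : E_cof lt theta d) by (apply NNPP; intro; apply Hgood; auto).
    assert (HC : clos fb d) by (apply NNPP; intro; apply Hgood; auto).
    assert (Hbd : lt beta d) by (apply nle_lt; intro; apply Hgood; auto).
    assert (Hex : exists i, lt i d /\ sup_is lt (fun x => A x /\ B0 i d x) d)
      by (apply NNPP; intro; apply Hgood; auto).
    clear Hgood Hbad.
    destruct HE as [Hlim Hcof']. split; [exact Hlim|].
    destruct Hex as [i [Hi Hsup]].
    set (T := fun x => A x /\ B0 i d x).
    assert (HT1 : forall x, T x -> lt x d) by (intros x [_ Bx]; apply (HB1 i d Hi); auto).
    destruct (records d T Hcof' HT1 (sup_cof_inv _ _ HT1 Hsup)) as [R [HRT [HRi1 [HRi2 HRkey]]]].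
    destruct (HAR (i, d) Hi) as [Ha [Hr1 Hr2]]. simpl in Ha, Hr1, Hr2.
    set (a := fst (AR (i, d))) in *. set (r := snd (AR (i, d))) in *.
    assert (RB : forall x, R x -> B0 i d x) by (intros x Rx; apply (HRT x Rx)).
    set (E' := fun z => exists x, R x /\ z = r x).
    destruct (HFam a Ha) as [_ Hcov].
    destruct (Hcov E') as [c [Fc [cE cth]]].
    + intros z [x [Rx E]]. subst z. apply Hr1. auto.
    + eapply inj_trans; [apply inj_img_back| exact HRi1].
    + eapply inj_trans; [exact HRi2| apply inj_img_fwd]. intros x y Rx Ry. apply Hr2; auto.
    + destruct (HEN a Ha c Fc) as [k [Hk Ek]].
      assert (Hkb : lt k beta) by (eapply ltt; [exact Hk| apply Hbeta; exists a; auto]).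
      assert (Ecand : forall x, cand i d k x <-> B0 i d x /\ c (r x)).
      { intro x. unfold cand. fold a r. rewrite Ek. tauto. }
      assert (candR : forall x, cand i d k x -> R x).
      { intros x Hx. apply Ecand in Hx. destruct Hx as [Bx cx].
        destruct (cE _ cx) as [x0 [Rx0 E]]. apply Hr2 in E; auto. subst; auto. }
      assert (candth : inj (fun y => lt y theta) (cand i d k)).
      { eapply inj_trans; [exact cth|].
        exists (fun z => epsilon (inhabits theta) (fun x => R x /\ z = r x)). split.
        - intros z cz. destruct (epsilon_spec (inhabits theta) (fun x => R x /\ z = r x) (cE z cz)) as [Rx E].
          apply Ecand. split; auto. rewrite <- E. auto.
        - intros z1 z2 H1 H2 E.
          destruct (epsilon_spec (inhabits theta) (fun x => R x /\ z1 = r x) (cE z1 H1)) as [_ E1].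
          destruct (epsilon_spec (inhabits theta) (fun x => R x /\ z2 = r x) (cE z2 H2)) as [_ E2].
          rewrite E1, E2, E. auto. }
      assert (Hgood : goodc (cand i d k) d).
      { assert (Bd : forall x, cand i d k x -> lt x d) by (intros x Hx; apply HT1, HRT, candR; auto).
        split; [exact Bd|]. apply sup_cof; [exact Hlim| exact Bd|]. apply HRkey; auto. }
      exists (G (i, k)). split.
      * destruct (mx_spec i k) as [L1 [L2 L3]].
        apply (ltt _ (fb (mx i k))); [apply Hfb; auto|]. apply HC.
        destruct L3 as [L3|L3]; rewrite L3; [exact Hi| eapply ltt; eauto].
      * intros x [[i' [k' [E [_ H]]]]|[N _]].
        -- apply G_inj in E. injection E; intros; subst. apply (HRT x (candR x H)).
        -- exfalso. apply N. exists i, k. exact (conj eq_refl Hgood).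
Qed.
End Main.

Theorem proposition3p26 (K : Type) (lt : K -> K -> Prop)
  (Hwo : well_order lt) (Hkappa : regular_uncountable_cardinal lt)
  (theta sigma : K)
  (Htheta_card : is_cardinal lt theta) (Htheta_inf : infinite_ord lt theta)
  (Htheta_reg : regular_card lt theta)
  (Hsigma_card : is_cardinal lt sigma) (Hsigma_inf : infinite_ord lt sigma)
  (Hts : lt theta sigma)
  (Hd : forall mu : K, is_cardinal lt mu -> le lt theta mu -> lt mu sigma ->
          d_lt_kappa lt theta mu)
  (J : set (set K)) (HJ : @is_ideal K lt J) (HJc : @kappa_complete K J)
  (HNS : forall B : set K, NS_restr lt theta B -> J B)
  (Hcof : @clubsuit_cof_star K lt sigma J) :
  @clubsuit_star K lt J.
Proof.
  exact (main K lt Hwo Hkappa theta sigma Htheta_card Hd J HJ HNS Hcof).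
Qed.
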